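(* Let $P\ge4$, $S\ge2$, $\varepsilon\ge0$, and let $R$ be a positive integer. Suppose that for every prime $p\in(P/2,P]$, $S_p$ is a multiset of integers in $(-p/2,p/2)$ with $|S_p|=S$ and $|f_{S_p}|\le\varepsilon$ (computed modulo $p$). Suppose $q$ is a prime with $q>P$. Then the multiset $$T=\{r+s^{(p)}(p^{-1})_q:\ 1\le r\le R,\ p \text{ prime},\ P/2<p\le P,\ s^{(p)}\in S_p\}$$ of residues modulo $q$ satisfies $$|f_T|\le\varepsilon+\frac{2/\sqrt3}{R}+\frac{\log(q/3)}{V\log(P/2)},$$ where $V$ is the number of primes in $(P/2,P]$.
   Context: $(a^{-1})_q$ denotes the inverse of $a$ modulo $q$. For a multiset $S$ of residues modulo $N$, $f_S(k)=\sum_{s\in S}e^{2\pi iks/N}$ (with multiplicity) and $|f_S|=\frac1{|S|}\max_{1\le k\le N-1}|f_S(k)|$. *)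

(* Defs.v *)
From Stdlib Require Import Reals ZArith List Znumtheory.
Open Scope R_scope.

Definition lsum (l : list Z) (g : Z -> R) : R :=
  fold_right (fun s acc => g s + acc) 0 l.

(* |f_S(k)| where f_S(k) = sum_{s in S} exp(2 pi i k s / N); the modulus of the
   complex sum is written out as sqrt(Re^2 + Im^2). *)
Definition fabsS (N : Z) (S : list Z) (k : Z) : R :=
  let th s := 2 * PI * IZR k * IZR s / IZR N in
  sqrt ((lsum S (fun s => cos (th s)))^2 + (lsum S (fun s => sin (th s)))^2).

(* |f_S| = (1/|S|) max_{1 <= k <= N-1} |f_S(k)|  (max over a nonempty list
   of nonnegative reals when N >= 2, so folding Rmax from 0 is exact). *)
Definition fnorm (N : Z) (S : list Z) : R :=
  / INR (length S) *
  fold_right Rmax 0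
    (map (fun k => fabsS N S k) (map Z.of_nat (seq 1 (Z.to_nat N - 1)))).

(* (a^{-1})_q : the inverse of a modulo a prime q, as the representative in
   [0, q) given by Fermat: a^(q-2) mod q. *)
Definition inv_mod (a q : Z) : Z := Z.modulo (Z.pow a (q - 2)) q.

Definition Tset (Rn : nat) (ps : list Z) (Sp : Z -> list Z) (q : Z) : list Z :=
  flat_map (fun r =>
    flat_map (fun p =>
      map (fun s => (Z.of_nat r + s * inv_mod p q)%Z) (Sp p)) ps)
    (seq 1 Rn).

(* Main.v *)
Require Import Defs.
From Stdlib Require Import Reals ZArith List Znumtheory Lra Lia Arith.
From Coquelicot Require Import Complex.
Open Scope R_scope.

Module FermatMC.
From mathcomp Require Import all_boot.
From mathcomp Require Import cyclic.
Local Open Scope nat_scope.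
Lemma pow_expn (a m : nat) : Nat.pow a m = expn a m.
Proof. elim: m => [|m IH] //=. by rewrite expnS IH. Qed.
Lemma fermat_nat (a n : nat) :
  (forall d, Nat.divide d n -> (d = 1)%nat \/ d = n) -> Peano.lt 1%nat n -> Peano.lt 0%nat a -> Peano.lt a n ->
  exists t, Nat.pow a (Nat.sub n 1) = Nat.add (Nat.mul t n) 1.
Proof.
move=> Hd /ltP Hn /ltP Ha0 /ltP Han.
have pn : prime n.
  apply/primeP; split => // d /dvdnP [k Hk].
  have [->|->] := Hd d (ex_intro _ k Hk); by rewrite eqxx ?orbT.
have cop : coprime a n.
  rewrite coprime_sym prime_coprime //; apply/negP => /dvdn_leq.
  by move=> /(_ Ha0); rewrite leqNgt Han.
have := Euler_exp_totient cop; rewrite totient_prime // => E.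
have key : a ^ n.-1 = (a ^ n.-1 %/ n) * n + 1.
  by rewrite {1}(divn_eq (a ^ n.-1) n) E modn_small.
exists (a ^ n.-1 %/ n); rewrite pow_expn (_ : Nat.sub n 1 = n.-1); last by lia.
exact key.
Qed.
End FermatMC.


Definition E (t : R) : C := (cos (2*PI*t), sin (2*PI*t)).

Fixpoint csum {A : Type} (l : list A) (g : A -> C) : C :=
  match l with nil => 0%C | x :: l' => (g x + csum l' g)%C end.
Fixpoint rsum {A : Type} (l : list A) (g : A -> R) : R :=
  match l with nil => 0 | x :: l' => g x + rsum l' g end.

Lemma csum_ext {A} (l : list A) g h : (forall x, In x l -> g x = h x) -> csum l g = csum l h.
Proof. induction l; simpl; intros H; auto. rewrite H, IHl; auto. Qed.

Lemma csum_app {A} (l1 l2 : list A) g : csum (l1 ++ l2) g = (csum l1 g + csum l2 g)%C.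
Proof. induction l1; simpl. ring. rewrite IHl1; ring. Qed.

Lemma csum_flat_map {A B} (l : list A) (f : A -> list B) g :
  csum (flat_map f l) g = csum l (fun x => csum (f x) g).
Proof. induction l; simpl; auto. rewrite csum_app, IHl; auto. Qed.

Lemma csum_map {A B} (l : list A) (f : A -> B) g : csum (map f l) g = csum l (fun x => g (f x)).
Proof. induction l; simpl; auto. rewrite IHl; auto. Qed.

Lemma csum_scal {A} (l : list A) c g : csum l (fun x => c * g x)%C = (c * csum l g)%C.
Proof. induction l; simpl. ring. rewrite IHl; ring. Qed.

Lemma csum_plus {A} (l : list A) g h : csum l (fun x => g x + h x)%C = (csum l g + csum l h)%C.
Proof. induction l; simpl. ring. rewrite IHl; ring. Qed.

Lemma Cmod_csum {A} (l : list A) g : Cmod (csum l g) <= rsum l (fun x => Cmod (g x)).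
Proof. induction l; simpl. rewrite Cmod_0; lra.
  eapply Rle_trans. apply Cmod_triangle. lra. Qed.

Lemma rsum_le {A} (l : list A) g h : (forall x, In x l -> g x <= h x) -> rsum l g <= rsum l h.
Proof. induction l; simpl; intros H. lra. assert (g a <= h a) by auto. assert (rsum l g <= rsum l h) by auto. lra. Qed.

Lemma rsum_const {A} (l : list A) c : rsum l (fun _ => c) = INR (length l) * c.
Proof. induction l; simpl length; simpl rsum. rewrite INR_0; ring. rewrite IHl, S_INR; ring. Qed.

Lemma rsum_plus {A} (l : list A) g h : rsum l (fun x => g x + h x) = rsum l g + rsum l h.
Proof. induction l; simpl. ring. rewrite IHl; ring. Qed.

Lemma rsum_scal {A} (l : list A) c g : rsum l (fun x => c * g x) = c * rsum l g.
Proof. induction l; simpl. ring. rewrite IHl; ring. Qed.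

Lemma E_add x y : E (x + y) = (E x * E y)%C.
Proof. unfold E. replace (2*PI*(x+y)) with (2*PI*x + 2*PI*y) by ring.
  rewrite cos_plus, sin_plus. unfold Cmult; simpl. f_equal; ring. Qed.

Lemma E_1 : E 1 = 1%C.
Proof. unfold E. rewrite Rmult_1_r, cos_2PI, sin_2PI. reflexivity. Qed.

Lemma E_nat x (n : nat) : E (x + INR n) = E x.
Proof. induction n. rewrite INR_0, Rplus_0_r; auto.
  rewrite S_INR, <- Rplus_assoc, E_add, IHn, E_1. ring. Qed.

Lemma E_int x (n : Z) : E (x + IZR n) = E x.
Proof. destruct (Z_le_gt_dec 0 n).
  - rewrite <- (Z2Nat.id n) by lia. rewrite <- INR_IZR_INZ. apply E_nat.
  - rewrite <- (E_nat (x + IZR n) (Z.to_nat (- n))). f_equal.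
    rewrite INR_IZR_INZ, Z2Nat.id by lia. rewrite opp_IZR. ring. Qed.

Lemma Cmod_E t : Cmod (E t) = 1.
Proof. unfold Cmod, E; simpl. rewrite Rmult_1_r, Rmult_1_r.
  rewrite (Rplus_comm (cos _ * _)). change (sin (2*PI*t) * sin (2*PI*t)) with (Rsqr (sin (2*PI*t))).
  change (cos (2*PI*t) * cos (2*PI*t)) with (Rsqr (cos (2*PI*t))). rewrite sin2_cos2. apply sqrt_1. Qed.

Lemma Cmod_E1 t : Cmod (E t - 1)%C = 2 * Rabs (sin (PI * t)).
Proof. unfold Cmod.
  replace (fst (E t - 1)%C) with (cos (2*PI*t) - 1) by (unfold E; simpl; ring).
  replace (snd (E t - 1)%C) with (sin (2*PI*t)) by (unfold E; simpl; ring).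
  replace (2*PI*t) with (2*(PI*t)) by ring. rewrite cos_2a_sin, sin_2a.
  set (a := PI * t).
  replace ((1 - 2 * sin a * sin a - 1) ^ 2 + (2 * sin a * cos a) ^ 2)
    with (Rsqr (2 * sin a)) .
  rewrite sqrt_Rsqr_abs, Rabs_mult, (Rabs_right 2) by lra. auto.
  assert (H := sin2_cos2 a). unfold Rsqr in *. nra. Qed.

Lemma geom a n u : (csum (seq a n) (fun r => E (INR r * u)) * (E u - 1))%C
   = (E (INR (a + n) * u) - E (INR a * u))%C.
Proof. revert a; induction n; intros a; cbn [seq csum].
  rewrite Nat.add_0_r. ring.
  rewrite Cmult_plus_distr_r, IHn. rewrite Nat.add_succ_r, Nat.add_succ_l.
  replace (INR (S a) * u) with (INR a * u + u) by (rewrite S_INR; ring).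
  rewrite E_add. ring. Qed.


Lemma fabsS_E N S k : fabsS N S k = Cmod (csum S (fun s => E (IZR k * IZR s / IZR N))).
Proof. unfold fabsS, Cmod. f_equal.
  assert (H1 : fst (csum S (fun s => E (IZR k * IZR s / IZR N))) =
     lsum S (fun s => cos (2 * PI * IZR k * IZR s / IZR N))).
  { induction S; simpl; auto. rewrite IHS. unfold E. simpl. f_equal. f_equal. unfold Rdiv; ring. }
  assert (H2 : snd (csum S (fun s => E (IZR k * IZR s / IZR N))) =
     lsum S (fun s => sin (2 * PI * IZR k * IZR s / IZR N))).
  { clear H1; induction S; simpl; auto. rewrite IHS. unfold E. simpl. f_equal. f_equal. unfold Rdiv; ring. }
  rewrite H1, H2. auto. Qed.

Lemma G_bound n u : Cmod (csum (seq 1 n) (fun r => E (INR r * u))) * (2 * Rabs (sin (PI * u))) <= 2.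
Proof. rewrite <- Cmod_E1, <- Cmod_mult, geom.
  eapply Rle_trans. apply Cmod_triangle. rewrite Cmod_opp, !Cmod_E. lra. Qed.

Lemma G_le n u : Cmod (csum (seq 1 n) (fun r => E (INR r * u))) <= INR n.
Proof. eapply Rle_trans. apply Cmod_csum. erewrite rsum_le. 2:{ intros; rewrite Cmod_E; apply Rle_refl. }
  rewrite rsum_const, seq_length. lra. Qed.

Lemma csum_le1 {A} (l : list A) g : (forall x, Cmod (g x) = 1) -> Cmod (csum l g) <= INR (length l).
Proof. intros H. eapply Rle_trans. apply Cmod_csum. erewrite rsum_le. 2:{ intros; rewrite H; apply Rle_refl. }
  rewrite rsum_const. lra. Qed.

Lemma sin_abs_le x y : Rabs x <= y -> y <= 1/2 -> Rabs (sin (PI * x)) <= sin (PI * y).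
Proof. intros H1 H2. assert (HP := PI_RGT_0).
  assert (0 <= y) by (pose proof (Rabs_pos x); lra).
  destruct (Rle_dec 0 x).
  - rewrite Rabs_right in H1 by lra. rewrite Rabs_right.
    apply sin_incr_1; nra.
    apply Rle_ge, sin_ge_0; nra.
  - rewrite Rabs_left in H1 by lra. rewrite Rabs_left1.
    rewrite <- sin_neg. replace (- (PI * x)) with (PI * - x) by ring. apply sin_incr_1; nra.
    assert (0 <= sin (PI * - x)) by (apply sin_ge_0; nra).
    rewrite <- (Ropp_involutive (PI * x)), sin_neg. replace (- (PI * x)) with (PI * - x) by ring. lra.
Qed.



Local Open Scope Z_scope.
Lemma fermat_Z (p q : Z) : prime q -> (0 < p < q)%Z -> exists b, (p * inv_mod p q = 1 + q * b)%Z.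
Proof. intros Hq Hp. assert (Hq2 := prime_ge_2 q Hq).
  destruct (FermatMC.fermat_nat (Z.to_nat p) (Z.to_nat q)) as [t Ht]; try lia.
  { intros d [z Hz]. assert (Hd : (Z.of_nat d | q)%Z).
    { exists (Z.of_nat z). rewrite <- (Z2Nat.id q) by lia. rewrite Hz, Nat2Z.inj_mul; auto. }
    destruct (prime_divisors q Hq _ Hd) as [H|[H|[H|H]]]; lia. }
  apply (f_equal Z.of_nat) in Ht. rewrite Nat2Z.inj_pow, Nat2Z.inj_add, Nat2Z.inj_mul, Nat2Z.inj_sub in Ht by lia.
  rewrite !Z2Nat.id in Ht by lia. simpl in Ht.
  unfold inv_mod. rewrite Z.mod_eq by lia.
  exists (Z.of_nat t - p * (p ^ (q - 2) / q))%Z.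
  assert (p * p ^ (q-2) = p ^ (q - 1))%Z as Hpw.
  { replace (q - 1)%Z with (Z.succ (q - 2)) by lia. rewrite Z.pow_succ_r by lia. ring. }
  rewrite Z.mul_sub_distr_l, Hpw, Ht. ring. Qed.

Lemma not_div_prod (a : Z) (l : list Z) : prime a -> (forall b, In b l -> prime b /\ b <> a) ->
  ~ (a | fold_right Z.mul 1 l)%Z.
Proof. intros Ha. induction l as [|b l IHl]; simpl; intros H Hd.
  - apply Z.divide_1_r in Hd. assert (Ha2 := prime_ge_2 a Ha). lia.
  - destruct (prime_mult a Ha _ _ Hd) as [Hb|Hb].
    + destruct (H b (or_introl eq_refl)) as [Hpb Hne].
      apply Hne. symmetry. apply prime_div_prime; auto.
    + apply IHl; auto. Qed.

Lemma prod_div (k : Z) (l : list Z) : NoDup l -> (forall p, In p l -> prime p /\ (p | k)%Z) ->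
  (fold_right Z.mul 1 l | k)%Z.
Proof. induction l as [|a l IH]; simpl; intros Hnd H.
  - apply Z.divide_1_l.
  - inversion Hnd; subst.
    destruct (H a (or_introl eq_refl)) as [Ha Hak].
    assert (Hl := IH H3 (fun p Hp => H p (or_intror Hp))).
    destruct Hl as [z Hz].
    assert (Hna : ~ (a | fold_right Z.mul 1 l)%Z).
    { apply not_div_prod; auto. intros b Hb. split. apply H; auto.
      intros ->. auto. }
    rewrite Hz in Hak.
    assert (Hz' : (a | z)%Z).
    { apply Gauss with (fold_right Z.mul 1 l). rewrite Z.mul_comm; auto. apply prime_rel_prime; auto. }
    destruct Hz' as [w Hw]. exists w. rewrite Hz, Hw. ring. Qed.
Local Open Scope R_scope.



Lemma csum_scal_r {A} (l : list A) c g : (csum l g * c)%C = csum l (fun x => g x * c)%C.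
Proof. induction l; simpl. ring. rewrite <- IHl; ring. Qed.

Lemma factor_T Rn ps Sp q kk : IZR q <> 0 ->
  csum (Tset Rn ps Sp q) (fun t => E (IZR kk * IZR t / IZR q)) =
  (csum (seq 1 Rn) (fun r => E (INR r * (IZR kk / IZR q))) *
   csum ps (fun p => csum (Sp p) (fun s => E (IZR kk / IZR q * (IZR s * IZR (inv_mod p q))))))%C.
Proof. intros Hq. unfold Tset. rewrite csum_flat_map, csum_scal_r. apply csum_ext. intros r _.
  rewrite csum_flat_map, <- csum_scal. apply csum_ext. intros p _.
  rewrite csum_map, <- csum_scal. apply csum_ext. intros s _.
  rewrite <- E_add. f_equal. rewrite plus_IZR, mult_IZR, <- INR_IZR_INZ. field. auto. Qed.

Lemma In_fold_Rmax x l : In x l -> x <= fold_right Rmax 0 l.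
Proof. induction l; simpl. tauto. intros [->|H]. apply Rmax_l.
  eapply Rle_trans. apply IHl; auto. apply Rmax_r. Qed.

Lemma fold_Rmax_le l c : 0 <= c -> (forall x, In x l -> x <= c) -> fold_right Rmax 0 l <= c.
Proof. induction l; simpl; intros H0 H. auto. apply Rmax_lub; auto. Qed.

Lemma fabsS_le_eps p Sl j eps : (0 < length Sl)%nat -> fnorm p Sl <= eps -> (0 < j < p)%Z ->
  fabsS p Sl j <= INR (length Sl) * eps.
Proof. intros HS Hf Hj. unfold fnorm in Hf.
  assert (HS' : 0 < INR (length Sl)) by (apply lt_0_INR; auto).
  set (M := fold_right Rmax 0 _) in Hf.
  assert (fabsS p Sl j <= M).
  { apply In_fold_Rmax. apply in_map_iff. exists j. split; auto.
    apply in_map_iff. exists (Z.to_nat j). split. lia. apply in_seq. lia. }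
  assert (M <= INR (length Sl) * eps).
  { apply Rmult_le_compat_l with (r := INR (length Sl)) in Hf; [|lra].
    rewrite <- Rmult_assoc, Rinv_r, Rmult_1_l in Hf by lra. auto. }
  lra. Qed.

Lemma sin_abs_eq u : Rabs u <= 1 -> Rabs (sin (PI * u)) = sin (PI * Rabs u).
Proof. intros H. assert (HP := PI_RGT_0). destruct (Rle_dec 0 u).
  - rewrite Rabs_right with (r := u) by lra. apply Rabs_right, Rle_ge, sin_ge_0.
    nra. rewrite Rabs_right in H; nra.
  - rewrite Rabs_left with (r := u) by lra. rewrite Rabs_left in H by lra.
    replace (PI * - u) with (- (PI * u)) by ring. rewrite sin_neg.
    rewrite Rabs_left1. auto.
    assert (0 <= sin (- (PI * u))) by (apply sin_ge_0; nra). rewrite sin_neg in H0; lra. Qed.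


Lemma Hp_bound (q p : Z) (Sl : list Z) (eps : R) (kk : Z) :
 prime q -> prime p -> (p < q)%Z -> 0 <= eps -> (0 < length Sl)%nat -> fnorm p Sl <= eps ->
 (forall s, In s Sl -> -(IZR p/2) < IZR s /\ IZR s < IZR p/2) ->
 Rabs (IZR kk / IZR q) <= 1/2 ->
 Cmod (csum Sl (fun s => E (IZR kk / IZR q * (IZR s * IZR (inv_mod p q))))) <=
   INR (length Sl) * eps + INR (length Sl) * (if Z.eqb (kk mod p) 0 then 1 else 0)
   + INR (length Sl) * (2 * sin (PI * (Rabs (IZR kk / IZR q) / 2))).
Proof. intros Hq Hp Hpq He HS Hf Hs Hu.
  assert (Hq2 := prime_ge_2 q Hq). assert (Hp2 := prime_ge_2 p Hp).
  assert (HqR : 0 < IZR q) by (apply IZR_lt; lia).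
  assert (HpR : 0 < IZR p) by (apply IZR_lt; lia).
  assert (HP := PI_RGT_0).
  set (u := IZR kk / IZR q) in *.
  destruct (fermat_Z p q Hq ltac:(lia)) as [b Hb].
  set (a := inv_mod p q) in *.
  assert (Ha : IZR a = (1 + IZR q * IZR b) / IZR p).
  { apply (f_equal IZR) in Hb. rewrite mult_IZR, plus_IZR, mult_IZR in Hb.
    rewrite <- Hb. field. lra. }
  set (m := (kk * b)%Z).
  rewrite (csum_ext _ _ (fun s => E (IZR m * IZR s / IZR p) + E (IZR m * IZR s / IZR p) * (E (u * IZR s / IZR p) - 1))%C).
  2:{ intros s _. replace (u * (IZR s * IZR a)) with (IZR m * IZR s / IZR p + u * IZR s / IZR p).
      rewrite E_add. ring. unfold u, m. rewrite Ha, mult_IZR. field. split; lra. }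
  rewrite csum_plus. eapply Rle_trans. apply Cmod_triangle.
  assert (Hsin0 : 0 <= sin (PI * (Rabs u / 2))).
  { apply sin_ge_0. assert (H := Rabs_pos u). nra. nra. }
  assert (H2 : Cmod (csum Sl (fun s => E (IZR m * IZR s / IZR p) * (E (u * IZR s / IZR p) - 1))%C)
      <= INR (length Sl) * (2 * sin (PI * (Rabs u / 2)))).
  { eapply Rle_trans. apply Cmod_csum. rewrite <- rsum_const. apply rsum_le. intros s Hin.
    rewrite Cmod_mult, Cmod_E, Cmod_E1, Rmult_1_l. apply Rmult_le_compat_l. lra.
    apply sin_abs_le. 2: assert (H := Rabs_pos u); lra.
    destruct (Hs s Hin) as [h1 h2].
    unfold Rdiv. rewrite !Rabs_mult, Rabs_inv, (Rabs_right (IZR p)) by lra.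
    assert (Rabs (IZR s) <= IZR p / 2) by (apply Rabs_le; lra).
    assert (H0 := Rabs_pos u). assert (H1 := Rabs_pos (IZR s)).
    apply Rmult_le_reg_r with (IZR p). lra.
    rewrite Rmult_assoc, Rinv_l by lra. nra. }
  assert (H1 : Cmod (csum Sl (fun s => E (IZR m * IZR s / IZR p)))
      <= INR (length Sl) * eps + INR (length Sl) * (if Z.eqb (kk mod p) 0 then 1 else 0)).
  { assert (HSR : 0 < INR (length Sl)) by (apply lt_0_INR; auto).
    destruct (Z.eqb_spec (kk mod p) 0) as [E0|E0].
    - eapply Rle_trans. apply csum_le1. intros; apply Cmod_E. nra.
    - assert (Hm : (m mod p <> 0)%Z).
      { intros Hm. apply Z.mod_divide in Hm; [|lia]. unfold m in Hm.
        destruct (prime_mult p Hp _ _ Hm) as [Hk|Hk].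
        + apply E0. apply Z.mod_divide; auto; lia.
        + destruct Hk as [t Ht]. subst b. assert (Hx : (p * (a - q * t) = 1)%Z) by lia. clear -Hx Hp2. destruct (Z_le_gt_dec (a - q*t) 0); nia. }
      set (j := (m mod p)%Z).
      assert (Hj : (0 < j < p)%Z) by (assert (H := Z.mod_pos_bound m p ltac:(lia)); unfold j; lia).
      rewrite (csum_ext _ _ (fun s => E (IZR j * IZR s / IZR p))).
      2:{ intros s _. rewrite (Z_div_mod_eq_full m p). fold j.
          rewrite plus_IZR, mult_IZR.
          replace ((IZR p * IZR (m / p) + IZR j) * IZR s / IZR p) with
            (IZR j * IZR s / IZR p + IZR (m / p * s)) by (rewrite mult_IZR; field; lra).
          apply E_int. }
      rewrite <- fabsS_E. eapply Rle_trans. apply fabsS_le_eps; eauto. lra. }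
  lra. Qed.


Lemma rsum_ind {A} (l : list A) (f : A -> bool) :
  rsum l (fun p => if f p then 1 else 0) = INR (length (filter f l)).
Proof. induction l; simpl. auto. destruct (f a); simpl length; rewrite IHl; try rewrite S_INR; ring. Qed.

Lemma pow_le_prod (x : R) (l : list Z) : 0 <= x -> (forall p, In p l -> x <= IZR p) ->
  x ^ length l <= IZR (fold_right Z.mul 1%Z l).
Proof. intros Hx; induction l; simpl; intros H. lra.
  rewrite mult_IZR. apply Rmult_le_compat; auto. apply pow_le; auto. Qed.

Lemma ln_le' x y : 0 < x -> x <= y -> ln x <= ln y.
Proof. intros H1 H2. destruct (Req_dec x y). subst; lra. apply Rlt_le, ln_increasing; lra. Qed.

Lemma count_bound (P : R) ps (kk q : Z) : 4 <= P ->
  (forall p, In p ps -> prime p /\ P/2 < IZR p) -> NoDup ps -> kk <> 0%Z -> (3 * Z.abs kk <= q)%Z ->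
  rsum ps (fun p => if Z.eqb (kk mod p) 0 then 1 else 0) * ln (P/2) <= ln (IZR q / 3).
Proof. intros HP Hps Hnd Hk Hkq. rewrite rsum_ind.
  set (l := filter _ ps).
  assert (Hd : (fold_right Z.mul 1%Z l | kk)%Z).
  { apply prod_div. apply NoDup_filter; auto.
    intros p Hp. unfold l in Hp. apply filter_In in Hp. destruct Hp as [Hp He].
    destruct (Hps p Hp) as [Hpr _]. split; auto. apply Z.eqb_eq in He.
    apply Z.mod_divide; auto. assert (H := prime_ge_2 p Hpr). lia. }
  apply Z.divide_abs_r in Hd. apply Z.divide_pos_le in Hd; [|lia].
  assert (Hpow : (P/2) ^ length l <= IZR (fold_right Z.mul 1%Z l)).
  { apply pow_le_prod. lra. intros p Hp. unfold l in Hp. apply filter_In in Hp.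
    destruct (Hps p (proj1 Hp)). lra. }
  apply IZR_le in Hd. apply IZR_le in Hkq. rewrite mult_IZR in Hkq.
  rewrite <- ln_pow by lra.
  apply ln_le'. apply pow_lt; lra. lra. Qed.


Lemma le_2_sqrt3 a : 0 <= a -> a * (sqrt 3 / 2) <= 1 -> a <= 2 / sqrt 3.
Proof. intros Ha H. assert (Hs : 0 < sqrt 3) by (apply sqrt_lt_R0; lra).
  apply Rmult_le_reg_r with (sqrt 3 / 2). lra.
  replace (2 / sqrt 3 * (sqrt 3 / 2)) with 1 by (field; lra). auto. Qed.

Lemma G_small n u : Rabs u <= 1/3 ->
  Cmod (csum (seq 1 n) (fun r => E (INR r * u))) * (2 * sin (PI * (Rabs u / 2))) <= 2 / sqrt 3.
Proof. intros Hu. assert (HP := PI_RGT_0). assert (H0 := Rabs_pos u).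
  assert (HG := G_bound n u). rewrite sin_abs_eq in HG by lra.
  replace (PI * Rabs u) with (2 * (PI * (Rabs u / 2))) in HG by field.
  rewrite sin_2a in HG. set (x := PI * (Rabs u / 2)) in *.
  assert (Hc : sqrt 3 / 2 <= cos x).
  { rewrite <- cos_PI6. apply cos_decr_1; unfold x; nra. }
  assert (Hsx : 0 <= sin x) by (apply sin_ge_0; unfold x; nra).
  set (g := Cmod _) in *. assert (Hg : 0 <= g) by apply Cmod_ge_0.
  apply le_2_sqrt3. nra. assert (0 <= g * sin x * (cos x - sqrt 3 / 2)) by (apply Rmult_le_pos; nra). nra. Qed.

Lemma G_large n u : 1/3 <= Rabs u -> Rabs u <= 1/2 ->
  Cmod (csum (seq 1 n) (fun r => E (INR r * u))) <= 2 / sqrt 3.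
Proof. intros H1 H2. assert (HP := PI_RGT_0).
  assert (HG := G_bound n u). rewrite sin_abs_eq in HG by lra.
  assert (Hs : sqrt 3 / 2 <= sin (PI * Rabs u)).
  { rewrite <- sin_PI3. apply sin_incr_1; nra. }
  set (g := Cmod _) in *. assert (Hg : 0 <= g) by apply Cmod_ge_0.
  apply le_2_sqrt3. auto. nra. Qed.


Lemma div_nonneg a b : 0 <= a -> 0 < b -> 0 <= a / b.
Proof. intros. unfold Rdiv. apply Rmult_le_pos; auto. left; apply Rinv_0_lt_compat; auto. Qed.

Lemma key_k (P : R) (S : nat) (eps : R) (Rn : nat) (ps : list Z) (Sp : Z -> list Z) (q kk : Z) :
  4 <= P -> 0 <= eps -> (1 <= Rn)%nat -> (1 <= S)%nat -> NoDup ps ->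
  (forall p : Z, In p ps <-> (prime p /\ P / 2 < IZR p /\ IZR p <= P)) ->
  (forall p : Z, In p ps ->
     length (Sp p) = S /\
     (forall s : Z, In s (Sp p) -> - (IZR p / 2) < IZR s /\ IZR s < IZR p / 2) /\
     fnorm p (Sp p) <= eps) ->
  prime q -> P < IZR q -> (1 <= length ps)%nat -> kk <> 0%Z -> (2 * Z.abs kk <= q)%Z ->
  Cmod (csum (Tset Rn ps Sp q) (fun t => E (IZR kk * IZR t / IZR q))) <=
  INR Rn * INR (length ps) * INR S *
   (eps + (2 / sqrt 3) / INR Rn + ln (IZR q / 3) / (INR (length ps) * ln (P / 2))).
Proof. intros HP He HR HS Hnd Hps HSp Hq HPq HV Hk Hkq.
  assert (Hq2 := prime_ge_2 q Hq).
  assert (HqR : 0 < IZR q) by (apply IZR_lt; lia).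
  rewrite factor_T by lra. rewrite Cmod_mult.
  set (u := IZR kk / IZR q).
  set (G := Cmod (csum (seq 1 Rn) _)).
  set (H := csum ps _).
  assert (HG0 : 0 <= G) by apply Cmod_ge_0.
  assert (HGR : G <= INR Rn) by apply G_le.
  assert (Hau : Rabs u = IZR (Z.abs kk) / IZR q).
  { unfold u, Rdiv. rewrite Rabs_mult, Rabs_inv, abs_IZR, (Rabs_right (IZR q)) by lra. auto. }
  assert (HkR : 2 * IZR (Z.abs kk) <= IZR q) by (rewrite <- mult_IZR; apply IZR_le; lia).
  assert (Hu2 : Rabs u <= 1/2).
  { rewrite Hau. apply Rmult_le_reg_r with (IZR q); auto. unfold Rdiv. rewrite Rmult_assoc, Rinv_l; lra. }
  set (R := INR Rn). set (V := INR (length ps)). set (SR := INR S).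
  assert (HR1 : 1 <= R) by (unfold R; apply (le_INR 1); auto).
  assert (HV1 : 1 <= V) by (unfold V; apply (le_INR 1); auto).
  assert (HS1 : 1 <= SR) by (unfold SR; apply (le_INR 1); auto).
  assert (Hs3 : 0 < sqrt 3) by (apply sqrt_lt_R0; lra).
  assert (HlnP : 0 < ln (P / 2)).
  { rewrite <- ln_1. apply ln_increasing; lra. }
  assert (HlnQ : 0 <= ln (IZR q / 3)).
  { rewrite <- ln_1. apply ln_le'; lra. }
  set (L := ln (IZR q / 3)) in *. set (lP := ln (P / 2)) in *.
  replace (R * V * SR * (eps + 2 / sqrt 3 / R + L / (V * lP)))
    with (R * V * SR * eps + V * SR * (2 / sqrt 3) + R * SR * (L / lP)) by (field; lra).
  assert (HLl : 0 <= L / lP) by (apply div_nonneg; lra).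
  assert (Hs3' : 0 <= 2 / sqrt 3) by (apply div_nonneg; lra).
  assert (HlenS : forall p, In p ps -> INR (length (Sp p)) = SR).
  { intros p Hp. destruct (HSp p Hp) as [-> _]. auto. }
  destruct (Z_le_gt_dec (3 * Z.abs kk) q) as [Hsm|Hlg].
  -
    assert (Hu3 : Rabs u <= 1/3).
    { rewrite Hau. assert (3 * IZR (Z.abs kk) <= IZR q) by (rewrite <- mult_IZR; apply IZR_le; lia).
      apply Rmult_le_reg_r with (IZR q); auto. unfold Rdiv. rewrite Rmult_assoc, Rinv_l; lra. }
    set (delta := 2 * sin (PI * (Rabs u / 2))).
    set (c := rsum ps (fun p => if Z.eqb (kk mod p) 0 then 1 else 0)).
    assert (HH : Cmod H <= V * SR * eps + SR * c + V * SR * delta).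
    { eapply Rle_trans. apply Cmod_csum.
      eapply Rle_trans. apply rsum_le with
        (h := fun p => SR * eps + SR * (if Z.eqb (kk mod p) 0 then 1 else 0) + SR * delta).
      { intros p Hp. destruct (HSp p Hp) as [HL [Hs Hf]].
        destruct (proj1 (Hps p) Hp) as [Hpp [Hp1 Hp2]].
        rewrite <- (HlenS p Hp). apply Hp_bound; auto.
        apply lt_IZR. lra. lia. }
      rewrite !rsum_plus, !rsum_scal, !rsum_const. fold c V. lra. }
    assert (Hc : c * lP <= L).
    { apply count_bound; auto. intros p Hp. destruct (proj1 (Hps p) Hp) as [? [? ?]]. auto. }
    assert (Hc' : c <= L / lP).
    { apply Rmult_le_reg_r with lP; auto. unfold Rdiv. rewrite Rmult_assoc, Rinv_l; lra. }
    assert (HGd : G * delta <= 2 / sqrt 3) by (apply G_small; auto).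
    assert (Hd0 : 0 <= delta).
    { unfold delta. assert (HP0 := PI_RGT_0). assert (H0 := Rabs_pos u).
      assert (0 <= sin (PI * (Rabs u / 2))) by (apply sin_ge_0; nra). lra. }
    assert (Hc0 : 0 <= c).
    { unfold c. rewrite rsum_ind. apply pos_INR. }
    apply Rle_trans with (G * (V * SR * eps + SR * c + V * SR * delta)).
    { apply Rmult_le_compat_l; auto. }
    replace (G * (V * SR * eps + SR * c + V * SR * delta))
      with (G * (V * SR * eps + SR * c) + V * SR * (G * delta)) by ring.
    assert (G * (V * SR * eps + SR * c) <= R * (V * SR * eps + SR * c)).
    { apply Rmult_le_compat_r; auto. assert (0 <= V * SR * eps) by (apply Rmult_le_pos; nra). nra. }
    assert (V * SR * (G * delta) <= V * SR * (2 / sqrt 3)).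
    { apply Rmult_le_compat_l; nra. }
    assert (R * SR * c <= R * SR * (L / lP)).
    { apply Rmult_le_compat_l; nra. }
    nra.
  -
    assert (Hu3 : 1/3 <= Rabs u).
    { rewrite Hau. assert (IZR q <= 3 * IZR (Z.abs kk)) by (rewrite <- mult_IZR; apply IZR_le; lia).
      apply Rmult_le_reg_r with (IZR q); auto. replace (IZR (Z.abs kk) / IZR q * IZR q) with (IZR (Z.abs kk)) by (field; lra). lra. }
    assert (HGl : G <= 2 / sqrt 3) by (apply G_large; auto).
    assert (HH : Cmod H <= V * SR).
    { eapply Rle_trans. apply Cmod_csum. unfold V; rewrite <- rsum_const. apply rsum_le.
      intros p Hp. rewrite <- (HlenS p Hp). apply csum_le1. intros; apply Cmod_E. }
    assert (HH0 : 0 <= Cmod H) by apply Cmod_ge_0.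
    assert (G * Cmod H <= (2 / sqrt 3) * (V * SR)) by (apply Rmult_le_compat; auto).
    assert (0 <= R * V * SR * eps) by (apply Rmult_le_pos; nra).
    assert (0 <= R * SR * (L / lP)) by (apply Rmult_le_pos; nra).
    nra.
Qed.


Lemma length_flat_map_const {A B} (f : A -> list B) l n :
  (forall x, In x l -> length (f x) = n) -> length (flat_map f l) = (length l * n)%nat.
Proof. induction l; simpl; intros H; auto. rewrite length_app, H, IHl; auto. Qed.

Theorem lemma12 (P : R) (S : nat) (eps : R) (Rn : nat)
  (ps : list Z) (Sp : Z -> list Z) (q : Z) :
  4 <= P -> (2 <= S)%nat -> 0 <= eps -> (1 <= Rn)%nat ->
  (* ps enumerates (without repetition) the primes p with P/2 < p <= P *)
  NoDup ps ->
  (forall p : Z, In p ps <-> (prime p /\ P / 2 < IZR p /\ IZR p <= P)) ->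
  (forall p : Z, In p ps ->
     length (Sp p) = S /\
     (forall s : Z, In s (Sp p) -> - (IZR p / 2) < IZR s /\ IZR s < IZR p / 2) /\
     fnorm p (Sp p) <= eps) ->
  prime q -> P < IZR q ->
  fnorm q (Tset Rn ps Sp q) <=
    eps + (2 / sqrt 3) / INR Rn
        + ln (IZR q / 3) / (INR (length ps) * ln (P / 2)).
Proof. intros HP HS He HR Hnd Hps HSp Hq HPq.
  assert (Hq2 := prime_ge_2 q Hq).
  assert (HqR : 0 < IZR q) by (apply IZR_lt; lia).
  assert (Hs3 : 0 < sqrt 3) by (apply sqrt_lt_R0; lra).
  assert (HR1 : 1 <= INR Rn) by (apply (le_INR 1); auto).
  destruct (list_eq_dec Z.eq_dec ps nil) as [Eps|Eps].
  - subst ps.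
    assert (HT : Tset Rn nil Sp q = nil).
    { unfold Tset. induction (seq 1 Rn); simpl; auto. }
    rewrite HT. unfold fnorm. simpl length. rewrite INR_0, Rinv_0, Rmult_0_l, Rmult_0_l.
    replace (ln (IZR q / 3) / 0) with 0 by (unfold Rdiv; rewrite Rinv_0; ring). rewrite Rplus_0_r.
    assert (0 <= 2 / sqrt 3 / INR Rn).
    { unfold Rdiv. apply Rmult_le_pos. apply Rmult_le_pos. lra. left; apply Rinv_0_lt_compat; lra.
      left; apply Rinv_0_lt_compat; lra. }
    lra.
  - assert (HV : (1 <= length ps)%nat) by (destruct ps; simpl; [congruence|lia]).
    set (RHS := eps + 2 / sqrt 3 / INR Rn + ln (IZR q / 3) / (INR (length ps) * ln (P / 2))).
    set (T := Tset Rn ps Sp q).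
    assert (HlenT : INR (length T) = INR Rn * INR (length ps) * INR S).
    { unfold T, Tset. rewrite (length_flat_map_const _ _ (length ps * S)).
      rewrite length_seq, !mult_INR. ring.
      intros r _. rewrite (length_flat_map_const _ _ S). auto.
      intros p Hp. rewrite length_map. apply HSp; auto. }
    assert (Hbound : forall kk, kk <> 0%Z -> (2 * Z.abs kk <= q)%Z ->
       Cmod (csum T (fun t => E (IZR kk * IZR t / IZR q))) <= INR (length T) * RHS).
    { intros kk Hk Hkq. rewrite HlenT. apply key_k; auto. lia. }
    assert (HRHS : 0 <= INR (length T) * RHS).
    { eapply Rle_trans. apply Cmod_ge_0. apply (Hbound 1%Z); lia. }
    assert (HT0 : 0 < INR (length T)).
    { rewrite HlenT. apply Rmult_lt_0_compat. apply Rmult_lt_0_compat. lra.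
      apply (lt_INR 0); lia. apply (lt_INR 0); lia. }
    unfold fnorm. fold T.
    apply Rmult_le_reg_l with (INR (length T)); auto.
    rewrite <- Rmult_assoc, Rinv_r, Rmult_1_l by lra.
    apply fold_Rmax_le; auto.
    intros x Hx. apply in_map_iff in Hx. destruct Hx as [k [<- Hk]].
    apply in_map_iff in Hk. destruct Hk as [kn [<- Hkn]]. apply in_seq in Hkn.
    destruct (Z_le_gt_dec (2 * Z.of_nat kn) q) as [Hsm|Hlg].
    + rewrite fabsS_E. apply Hbound; lia.
    + rewrite fabsS_E.
      rewrite (csum_ext _ _ (fun t => E (IZR (Z.of_nat kn - q) * IZR t / IZR q))).
      apply Hbound; lia.
      intros t _. rewrite <- (E_int (IZR (Z.of_nat kn - q) * IZR t / IZR q) t). f_equal. rewrite minus_IZR. field. lra.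
Qed.
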